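(* Let $\mathbb{J}$ be a real symmetric $N\times N$ matrix with vanishing diagonal, and for $\boldsymbol\kappa\in\mathbb{R}^N$ put $\mathbb{J}(\boldsymbol\kappa)=\mathbb{J}+\operatorname{diag}(\kappa_1,\ldots,\kappa_N)$. (i) If $\mathbf{s}$ is a ground state of $\mathbb{J}$ and $\check{\boldsymbol\kappa}\in\mathbb{R}^N$ satisfies $\mathbb{J}(\check{\boldsymbol\kappa})\mathbf{s}=0$ (i.e. $\check{\boldsymbol\kappa}$ are Lagrange parameters of $\mathbf{s}$), then $\mathbb{J}(\check{\boldsymbol\kappa})\,G(\mathbf{s})=0$. (ii) Let $S\subseteq\mathbb{R}^N$ be a completely elliptic subspace such that $\mathcal{F}_S=\{G\in\mathcal{G}_N:\operatorname{range}G\subseteq S\}$ is a non-trivial closed face of $\mathcal{G}_N$, and let $S^\perp$ be the orthogonal complement of $S$. Then every positive semi-definite real symmetric $N\times N$ matrix $A$ with support (range) $S^\perp$ can be written as $A=\mathbb{J}'(\boldsymbol\kappa)$, where $\mathbb{J}'$ is the zero-diagonal matrix equal to $A$ off the diagonal and $\kappa_\mu=A_{\mu\mu}$, such that for every configuration $\mathbf{s}$ with $G(\mathbf{s})\in\mathcal{F}_S$, $\mathbf{s}$ is a ground state of $\mathbb{J}'$ with Lagrange parameters $\boldsymbol\kappa$, i.e. $\mathbb{J}'(\boldsymbol\kappa)\mathbf{s}=0$. (iii) Let $G_0$ be a boundary point of $\mathcal{G}_N$ (i.e. $\operatorname{rank}G_0<N$) and let $\mathcal{F}_0$ be the closed face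 of $\mathcal{G}_N$ generated by $G_0$. Then $\mathcal{F}_0=\{G\in\mathcal{G}_N:\operatorname{range}G\subseteq S\}$ for some completely elliptic subspace $S\subseteq\mathbb{R}^N$. Moreover, let $\mathcal{C}(G_0)$ be the convex cone of all linear functionals $\ell$ on the space $\mathcal{L}_N$ of real symmetric $N\times N$ matrices with vanishing diagonal such that $\ell(G-G_0)\ge0$ for all $G\in\mathcal{G}_N$. Then $A\mapsto f(A)$, $f(A)(X)=\operatorname{Tr}(AX)$ for $X\in\mathcal{L}_N$, is an affine bijection from the cone of positive semi-definite real symmetric $N\times N$ matrices $A$ with range contained in $S^\perp$ onto $\mathcal{C}(G_0)$.
   Context: $\mathcal{G}_N$ is the set of real symmetric positive semi-definite $N\times N$ matrices with all diagonal entries equal to $1$. For $M\ge1$, a spin configuration is a real $N\times M$ matrix $\mathbf{s}$ whose rows $\mathbf{s}_\mu$ are unit vectors of $\mathbb{R}^M$; its Gram matrix is $G(\mathbf{s})=\mathbf{s}\mathbf{s}^\top\in\mathcal{G}_N$. The Heisenberg energy is $H(\mathbf{s})=\sum_{\mu,\nu=1}^N J_{\mu\nu}\,\mathbf{s}_\mu\cdot\mathbf{s}_\nu=\operatorname{Tr}(\mathbb{J}G(\mathbf{s}))$. A ground state of $\mathbb{J}$ is a configuration $\mathbf{s}$ at which $H$ attains its global minimum (equivalently, $G(\mathbf{s})$ minimizes $G\mapsto\operatorname{Tr}(\mathbb{J}G)$ over $\mathcal{G}_N$). A subspace $S\subseteq\mathbb{R}^N$ of dimension $M$ is completely elliptic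 if there is an $N\times M$ matrix whose columns lie in $S$, whose rows are unit vectors and whose rank is $M$. A face of a convex set $C$ is a convex subset $F\subseteq C$ such that $x=\alpha y+(1-\alpha)z$ with $x\in F$, $y,z\in C$, $0<\alpha<1$ implies $y,z\in F$; the face generated by a point is the smallest face containing it; a face is non-trivial if it differs from $\emptyset$ and $\mathcal{G}_N$. *)

(* Defs.v *)
From HB Require Import structures.
From mathcomp Require Import all_boot all_order all_algebra.
From mathcomp Require Import all_classical all_reals topology normedtype.
Set Implicit Arguments. Unset Strict Implicit. Unset Printing Implicit Defensive.
Import Order.TTheory GRing.Theory Num.Theory.
Import numFieldNormedType.Exports.
Local Open Scope ring_scope.
Local Open Scope classical_set_scope.

Section Defs.
Variable R : realType.

Definition h_symmetric_mx (N : nat) (A : 'M[R]_N) : Prop := A^T = A.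

Definition h_psd (N : nat) (A : 'M[R]_N) : Prop :=
  h_symmetric_mx A /\ forall v : 'rV[R]_N, 0 <= (v *m A *m v^T) 0 0.

Definition h_zero_diag_sym (N : nat) (X : 'M[R]_N) : Prop :=
  h_symmetric_mx X /\ forall i, X i i = 0.

Definition h_GN (N : nat) : set 'M[R]_N :=
  [set G | h_psd G /\ forall i, G i i = 1].

Definition h_configuration (N M : nat) (s : 'M[R]_(N, M)) : Prop :=
  forall i, \sum_(j < M) s i j ^+ 2 = 1.

Definition h_gram (N M : nat) (s : 'M[R]_(N, M)) : 'M[R]_N := s *m s^T.

Definition h_energy (N M : nat) (J : 'M[R]_N) (s : 'M[R]_(N, M)) : R :=
  \tr (J *m h_gram s).

Definition h_ground_state (N M : nat) (J : 'M[R]_N) (s : 'M[R]_(N, M)) : Prop :=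
  h_configuration s /\
  forall (M' : nat) (s' : 'M[R]_(N, M')), h_configuration s' ->
    h_energy J s <= h_energy J s'.

Definition h_Jk (N : nat) (J : 'M[R]_N) (k : 'rV[R]_N) : 'M[R]_N :=
  J + diag_mx k.

Definition h_lagrange (N M : nat) (J : 'M[R]_N) (k : 'rV[R]_N)
  (s : 'M[R]_(N, M)) : Prop := h_Jk J k *m s = 0.

(* A subspace S of R^N is represented by a matrix whose row space is S. *)
Definition h_completely_elliptic (N : nat) (S : 'M[R]_N) : Prop :=
  exists X : 'M[R]_(N, \rank S),
    (X^T <= S)%MS /\ (forall i, \sum_(j < \rank S) X i j ^+ 2 = 1) /\
    \rank X = \rank S.

Definition h_orthC (N : nat) (S : 'M[R]_N) : 'M[R]_N := kermx S^T.

(* F_S = { G in G_N : range G subset S } ; G symmetric so its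
   row space equals its range *)
Definition h_FS (N : nat) (S : 'M[R]_N) : set 'M[R]_N :=
  [set G | @h_GN N G /\ (G <= S)%MS].

Definition h_convex_set (N : nat) (C : set 'M[R]_N) : Prop :=
  forall x y a, C x -> C y -> 0 <= a <= 1 -> C (a *: x + (1 - a) *: y).

Definition h_is_face (N : nat) (C F : set 'M[R]_N) : Prop :=
  F `<=` C /\ h_convex_set F /\
  forall x y z a, F x -> C y -> C z -> 0 < a < 1 ->
    x = a *: y + (1 - a) *: z -> F y /\ F z.

Definition h_nontrivial_face (N : nat) (C F : set 'M[R]_N) : Prop :=
  h_is_face C F /\ F <> set0 /\ F <> C.

Definition h_face_generated (N : nat) (C : set 'M[R]_N) (x : 'M[R]_N)
  (F : set 'M[R]_N) : Prop :=
  h_is_face C F /\ F x /\ forall F', h_is_face C F' -> F' x -> F `<=` F'.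

Definition h_offdiag (N : nat) (A : 'M[R]_N) : 'M[R]_N :=
  \matrix_(i, j) (if i == j then 0 else A i j).
Definition h_diag_of (N : nat) (A : 'M[R]_N) : 'rV[R]_N := \row_i A i i.

(* linear functionals on L_N, represented by functions on all matrices
   whose values only matter on L_N *)
Definition h_linear_on_LN (N : nat) (l : 'M[R]_N -> R) : Prop :=
  forall (a : R) X Y, h_zero_diag_sym X -> h_zero_diag_sym Y ->
    l (a *: X + Y) = a * l X + l Y.

Definition h_coneC (N : nat) (G0 : 'M[R]_N) (l : 'M[R]_N -> R) : Prop :=
  h_linear_on_LN l /\ forall G, @h_GN N G -> 0 <= l (G - G0).

Definition h_fA (N : nat) (A : 'M[R]_N) : 'M[R]_N -> R := fun X => \tr (A *m X).

End Defs.

(* Main.v *)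
Require Import Defs.
From HB Require Import structures.
From mathcomp Require Import all_boot all_order all_algebra.
From mathcomp Require Import all_classical all_reals topology normedtype.
From mathcomp Require Import ring lra zify.
Import Order.TTheory GRing.Theory Num.Theory.
Import numFieldNormedType.Exports.
Local Open Scope ring_scope.
Set Implicit Arguments. Unset Strict Implicit. Unset Printing Implicit Defensive.
Section Aux.
Variable R : realType.

Lemma quad_aux (p q : R) : 0 <= q -> (forall t, 0 <= 2 * t * p + t ^+ 2 * q) -> p = 0.
Proof.
move=> q0 H.
have q1 : q + 1 != 0 by rewrite gt_eqF //; lra.
have := H (- p / (q + 1)).
set t := - p / (q + 1).
have ht : t * (q + 1) = - p by rewrite /t divfK.
move=> h; clearbody t.
have h2 : 0 <= (2 * t * p + t ^+ 2 * q) * (q+1)^+2 by apply: mulr_ge0 => //; nra.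
have E : (2 * t * p + t ^+ 2 * q) * (q+1)^+2 = 2 * (t * (q+1)) * p * (q+1) + (t * (q+1))^+2 * q by ring.
rewrite E ht in h2.
nra.
Qed.
End Aux.
Section Aux2.
Variable R : realType.
Implicit Types n : nat.

Lemma mx11_tr n (u v : 'rV[R]_n) (A : 'M[R]_n) :
  (u *m A *m v^T) 0 0 = (v *m A^T *m u^T) 0 0.
Proof.
have h : forall M : 'M[R]_1, M 0 0 = M^T 0 0 by move=> M; rewrite mxE.
by rewrite h !trmx_mul trmxK mulmxA.
Qed.

Lemma form_expand n (u v : 'rV[R]_n) (A : 'M[R]_n) (t : R) : A^T = A ->
  ((v + t *: u) *m A *m (v + t *: u)^T) 0 0 =
  (v *m A *m v^T) 0 0 + 2 * t * (v *m A *m u^T) 0 0 + t ^+ 2 * (u *m A *m u^T) 0 0.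
Proof.
move=> sA.
have e : (u *m A *m v^T) 0 0 = (v *m A *m u^T) 0 0 by rewrite mx11_tr sA.
rewrite linearD /= linearZ /= !mulmxDl !mulmxDr -!scalemxAl -!scalemxAr.
move: e; move: (v *m A *m v^T) (v *m A *m u^T) (u *m A *m v^T) (u *m A *m u^T) => a b c d e.
rewrite !mxE e; ring.
Qed.

Lemma sum_sq_eq0 n (u : 'rV[R]_n) : (u *m u^T) 0 0 = 0 -> u = 0.
Proof.
rewrite mxE => H; apply/rowP => j; rewrite mxE.
have P : forall i, predT i -> 0 <= u 0 i * u^T i 0 by move=> i _; rewrite mxE -expr2 sqr_ge0.
have := (@psumr_eq0P R _ predT (fun j => u 0 j * u^T j 0)) P H j isT.
by rewrite mxE => /eqP; rewrite mulf_eq0 orbb => /eqP.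
Qed.

Lemma psd_ker n (A : 'M[R]_n) (v : 'rV[R]_n) : h_psd A -> (v *m A *m v^T) 0 0 = 0 -> v *m A = 0.
Proof.
case=> sA pA H.
apply: sum_sq_eq0.
apply: (@quad_aux R _ (((v *m A) *m A *m (v *m A)^T) 0 0)); first exact: pA.
move=> t; have := pA (v + t *: (v *m A)).
by rewrite form_expand // H add0r.
Qed.
End Aux2.
Section Aux3.
Variable R : realType.

Lemma diag_entry n r (A : 'M[R]_n) (X : 'M[R]_(n, r)) k :
  (X^T *m A *m X) k k = (row k X^T *m A *m (row k X^T)^T) 0 0.
Proof.
rewrite !mxE; apply: eq_bigr => j _; rewrite !mxE; congr (_ * _).
by apply: eq_bigr => i _; rewrite !mxE.
Qed.

Lemma tr_gram n r (A : 'M[R]_n) (X : 'M[R]_(n, r)) :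
  \tr (A *m (X *m X^T)) = \sum_k (row k X^T *m A *m (row k X^T)^T) 0 0.
Proof.
rewrite mulmxA mxtrace_mulC mulmxA /mxtrace.
by apply: eq_bigr => k _; rewrite diag_entry.
Qed.

Lemma tr_psd_ge0 n r (A : 'M[R]_n) (X : 'M[R]_(n, r)) :
  h_psd A -> 0 <= \tr (A *m (X *m X^T)).
Proof.
case=> _ pA; rewrite tr_gram; apply: sumr_ge0 => k _; exact: pA.
Qed.

Lemma tr_psd_eq0 n r (A : 'M[R]_n) (X : 'M[R]_(n, r)) :
  h_psd A -> \tr (A *m (X *m X^T)) = 0 -> A *m X = 0.
Proof.
move=> psdA; have [sA pA] := psdA.
rewrite tr_gram => H.
have P : forall k, predT k -> 0 <= (row k X^T *m A *m (row k X^T)^T) 0 0 by move=> k _; exact: pA.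
apply/matrixP => i k; rewrite !mxE.
have := psd_ker psdA ((@psumr_eq0P R _ predT _) P H k isT).
move/matrixP/(_ 0 i); rewrite !mxE => E; rewrite -[X in _ = X]E.
apply: eq_bigr => j _; rewrite !mxE.
have -> : A i j = A^T j i by rewrite mxE.
by rewrite sA mulrC.
Qed.
End Aux3.
Section Fact.
Variable R : realType.

Lemma row_free_inj0 m n (A : 'M[R]_(m, n)) :
  (forall v : 'rV_m, v *m A = 0 -> v = 0) -> row_free A.
Proof.
move=> H; rewrite -kermx_eq0; apply/eqP/row_matrixP => i; rewrite row0.
by apply: H; apply/sub_kermxP; exact: row_sub.
Qed.

Lemma mx1_form n (x : 'M[R]_1) (M : 'M[R]_(1, n)) (v : 'rV[R]_n) :
  (x *m M *m v^T) 0 0 = x 0 0 * (M *m v^T) 0 0.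
Proof. by rewrite -mulmxA [x]mx11_scalar mul_scalar_mx !mxE eqxx mulr1n. Qed.

Lemma block_form n (a : 'M[R]_1) (b : 'M[R]_(n, 1)) (c : 'M[R]_n) (x : 'M[R]_1) (v : 'rV[R]_n) :
  ((row_mx x v) *m block_mx a b^T b c *m (row_mx x v)^T) 0 0 =
  x 0 0 ^+ 2 * a 0 0 + 2 * x 0 0 * (v *m b) 0 0 + (v *m c *m v^T) 0 0.
Proof.
rewrite mul_row_block tr_row_mx mul_row_col !mulmxDl.
have e1 : (x *m a *m x^T) 0 0 = x 0 0 ^+ 2 * a 0 0.
  by rewrite mx1_form [a]mx11_scalar mul_scalar_mx !mxE eqxx mulr1n; ring.
have e2 : (x *m b^T *m v^T) 0 0 = x 0 0 * (v *m b) 0 0.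
  by rewrite mx1_form -trmx_mul mxE.
have e3 : (v *m b *m x^T) 0 0 = x 0 0 * (v *m b) 0 0.
  by rewrite -mulmxA [x]mx11_scalar tr_scalar_mx mul_mx_scalar -scalemxAr !mxE eqxx mulr1n mulrC.
move: e1 e2 e3.
move: (v *m b) (x *m a *m x^T) (v *m b *m x^T) (x *m b^T *m v^T) (v *m c *m v^T) => B A1 A2 A3 A4 e1 e2 e3.
rewrite !mxE e1 e2 e3; ring.
Qed.
End Fact.
Section Fact2.
Variable R : realType.

Lemma lin_aux (p q : R) : (forall t, 0 <= 2 * t * p + q) -> p = 0.
Proof.
move=> H; apply/eqP; apply/negP => /negP p0.
have := H (- (q + 1) / (2 * p)).
have -> : 2 * (- (q + 1) / (2 * p)) * p = - (q + 1) by field.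
lra.
Qed.

Lemma psd_factor n (G : 'M[R]_n) :
  h_psd G -> exists r, exists X : 'M[R]_(n, r), G = X *m X^T /\ row_free X^T.
Proof.
elim: n G => [|n IH] G [sG pG].
  exists 0%N, 0; split; first by rewrite [G]flatmx0 [RHS]flatmx0.
  by rewrite trmx0 /row_free mxrank0.
pose a : 'M[R]_1 := ulsubmx (G : 'M_(1 + n)).
pose b := dlsubmx (G : 'M_(1 + n)).
pose c := drsubmx (G : 'M_(1 + n)).
have Gblk : (G : 'M_(1 + n)) = block_mx a b^T b c.
  by rewrite /a /b /c trmx_dlsub sG submxK.
have pform : forall (x : 'M[R]_1) (v : 'rV[R]_n), 0 <= x 0 0 ^+ 2 * a 0 0 + 2 * x 0 0 * (v *m b) 0 0 + (v *m c *m v^T) 0 0.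
  by move=> x v; have := pG (row_mx x v); rewrite Gblk block_form.
have sc : c^T = c by rewrite /c trmx_drsub sG.
have ha : a = (a 0 0)%:M := mx11_scalar a.
have a0 : 0 <= a 0 0.
  by have := pform 1%:M 0; rewrite !mul0mx !mxE eqxx mulr1n; lra.
move: a0; rewrite le_eqVlt => /orP[/eqP al0 | apos]; last first.
  set al := a 0 0 in apos pform ha.
  have al0 : al != 0 by rewrite gt_eqF.
  pose sg := Num.sqrt al.
  have sgpos : 0 < sg by rewrite sqrtr_gt0.
  have sg0 : sg != 0 by rewrite gt_eqF.
  have sgsq : sg * sg = al by rewrite -expr2 sqr_sqrtr // ltW.
  pose c' := c - al^-1 *: (b *m b^T).
  have psdc' : h_psd c'.
    split.
      by rewrite /h_symmetric_mx /c' linearB /= linearZ /= trmx_mul trmxK sc.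
    move=> v; have := pform ((- (v *m b) 0 0 / al)%:M) v.
    rewrite [_%:M _ _]mxE eqxx mulr1n.
    have -> : (v *m c' *m v^T) 0 0 = (v *m c *m v^T) 0 0 - al^-1 * ((v *m b) 0 0) ^+ 2.
      rewrite /c' mulmxBr mulmxBl -scalemxAr -scalemxAl.
      rewrite [v *m (b *m b^T)]mulmxA -[(v *m b *m b^T) *m v^T]mulmxA -trmx_mul.
      move: (v *m c *m v^T) (v *m b) => M B.
      by rewrite !mxE big_ord1 !mxE expr2.
    move: ((v *m c *m v^T) 0 0) ((v *m b) 0 0) => q p.
    have -> : (- p / al) ^+ 2 * al + 2 * (- p / al) * p + q = q - al^-1 * p ^+ 2 by field.
    done.
  have [r [Y [eY fY]]] := IH c' psdc'.
  exists (1 + r)%N, (block_mx (sg%:M : 'M_1) (0 : 'M_(1, r)) (sg^-1 *: b) Y); split.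
    suff : (G : 'M_(1 + n)) = block_mx (sg%:M : 'M_1) (0 : 'M_(1, r)) (sg^-1 *: b) Y *m
       (block_mx (sg%:M : 'M_1) (0 : 'M_(1, r)) (sg^-1 *: b) Y)^T by [].
    rewrite Gblk tr_block_mx mulmx_block !trmx0 !mulmx0 !addr0 ?mul0mx ?add0r ?addr0.
    congr block_mx.
    - by rewrite {1}ha tr_scalar_mx -scalar_mxM sgsq.
    - by rewrite linearZ /= mul_scalar_mx scalerA mulfV // scale1r.
    - by rewrite tr_scalar_mx mul_mx_scalar scalerA mulfV // scale1r.
    - rewrite linearZ /= -scalemxAl -scalemxAr scalerA -invfM sgsq -eY /c'.
      by rewrite addrC subrK.
  change (row_free ((block_mx (sg%:M : 'M_1) (0 : 'M_(1, r)) (sg^-1 *: b) Y)^T : 'M_(1 + r, 1 + n))).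
  rewrite tr_block_mx; apply: row_free_inj0 => v.
  rewrite -[v]hsubmxK; move: (lsubmx v) (rsubmx v) => v1 v2.
  rewrite mul_row_block !trmx0 !mulmx0 !addr0 tr_scalar_mx mul_mx_scalar => /eqP.
  rewrite row_mx_eq0 => /andP [h1 /eqP h2].
  have l0 : v1 = 0.
    by move: h1; rewrite scaler_eq0 (negbTE sg0) /= => /eqP.
  move: h2; subst v1; rewrite mul0mx add0r => h2.
  have r0 : v2 = 0 by apply: (row_free_inj fY); rewrite h2 mul0mx.
  by rewrite r0 row_mx0.
have b0 : b = 0.
  have hp : forall v : 'rV[R]_n, (v *m b) 0 0 = 0.
    move=> v; apply: (@lin_aux _ ((v *m c *m v^T) 0 0)) => t.
    by have := pform t%:M v; rewrite -al0 !mxE eqxx mulr1n; lra.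
  apply: trmx_inj; rewrite trmx0; apply: sum_sq_eq0; rewrite trmxK; exact: hp.
have psdc : h_psd c.
  split=> // v; have := pform 0 v; rewrite !mxE; lra.
have [r [Y [eY fY]]] := IH c psdc.
exists r, (col_mx (0 : 'M_(1, r)) Y); split.
  suff : (G : 'M_(1 + n)) = col_mx (0 : 'M_(1, r)) Y *m (col_mx (0 : 'M_(1, r)) Y)^T by [].
  rewrite Gblk tr_col_mx mul_col_row b0 trmx0 -eY ha -al0 mul0mx mulmx0.
  by congr block_mx; [apply/matrixP => i j; rewrite !mxE mul0rn | rewrite trmx0 mul0mx].
change (row_free ((col_mx (0 : 'M_(1, r)) Y)^T : 'M_(r, 1 + n))).
rewrite tr_col_mx; apply: row_free_inj0 => v; rewrite mul_mx_row trmx0 mulmx0 => /eqP.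
rewrite row_mx_eq0 => /andP [_ /eqP h]; apply: (row_free_inj fY); by rewrite h mul0mx.
Qed.
End Fact2.
Section LA.
Variable R : realType.

Lemma gram_entry n m (M : 'M[R]_(n, m)) i :
  (row i M *m (row i M)^T) 0 0 = (M *m M^T) i i.
Proof. by rewrite !mxE; apply: eq_bigr => j _; rewrite !mxE. Qed.

Lemma gram_eq0 n m (M : 'M[R]_(n, m)) : M *m M^T = 0 -> M = 0.
Proof.
move=> H; apply/row_matrixP => i; rewrite row0; apply: sum_sq_eq0.
by rewrite gram_entry H mxE.
Qed.

Lemma ker_sub n m p (A : 'M[R]_(m, n)) (B : 'M[R]_(p, n)) :
  (forall v : 'rV_n, v *m A^T = 0 -> v *m B^T = 0) -> (B <= A)%MS.
Proof.
move=> H.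
pose K := kermx A^T.
have KB : K *m B^T = 0.
  apply/row_matrixP => i; rewrite row_mul row0; apply: H.
  by apply/sub_kermxP; exact: row_sub.
have KA : K *m A^T = 0 by apply/sub_kermxP.
have sB : (B <= kermx K^T)%MS by apply/sub_kermxP; rewrite -[B]trmxK -trmx_mul KB trmx0.
have sA : (A <= kermx K^T)%MS by apply/sub_kermxP; rewrite -[A]trmxK -trmx_mul KA trmx0.
have rk : \rank A = \rank (kermx K^T).
  rewrite mxrank_ker mxrank_tr mxrank_ker mxrank_tr.
  have := rank_leq_col A; lia.
have := (mxrank_leqif_sup sA).2; rewrite rk eqxx => /esym sKA.
exact: submx_trans sB sKA.
Qed.

Lemma gram_rank n r (X : 'M[R]_(n, r)) : \rank (X *m X^T) = \rank X.
Proof.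
apply/eqP; rewrite eqn_leq mxrankM_maxl /= -mxrank_tr.
apply: mxrankS; apply: ker_sub => v.
rewrite trmx_mul trmxK mulmxA => H.
apply: sum_sq_eq0; rewrite trmx_mul mulmxA H mul0mx mxE //.
Qed.

Lemma psd_factor_rank n (G : 'M[R]_n) :
  h_psd G -> exists X : 'M[R]_(n, \rank G), G = X *m X^T /\ row_free X^T.
Proof.
move=> psdG; have [r [X [eG fX]]] := psd_factor psdG.
have er : \rank G = r by rewrite eG gram_rank -mxrank_tr; exact/eqP.
by rewrite er; exists X.
Qed.

Lemma tr_mul_diag n (M : 'M[R]_n) (d : 'rV[R]_n) :
  \tr (M *m diag_mx d) = \sum_i M i i * d 0 i.
Proof. by rewrite mul_mx_diag /mxtrace; apply: eq_bigr => i _; rewrite mxE. Qed.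

Lemma tr_diag_mul n (M : 'M[R]_n) (d : 'rV[R]_n) :
  \tr (diag_mx d *m M) = \sum_i d 0 i * M i i.
Proof. by rewrite mul_diag_mx /mxtrace; apply: eq_bigr => i _; rewrite mxE. Qed.

End LA.
Section Parts12.
Variable R : realType.

Lemma offdiag_decomp N (A : 'M[R]_N) : A = h_Jk (h_offdiag A) (h_diag_of A).
Proof.
apply/matrixP => i j; rewrite /h_Jk /h_offdiag /h_diag_of !mxE.
by case: (eqVneq i j) => [->|ne]; rewrite ?mulr1n ?mulr0n ?add0r ?addr0 // mxE.
Qed.

Lemma gram_diag N M (s : 'M[R]_(N, M)) i : h_configuration s -> h_gram s i i = 1.
Proof.
move=> cs; rewrite /h_gram mxE -(cs i); apply: eq_bigr => j _; by rewrite mxE expr2.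
Qed.

Lemma tr_unit_diag N (d : 'rV[R]_N) (G : 'M[R]_N) : (forall i, G i i = 1) ->
  \tr (diag_mx d *m G) = \sum_i d 0 i.
Proof. by move=> H; rewrite tr_diag_mul; apply: eq_bigr => i _; rewrite H mulr1. Qed.

Lemma offdiag_eq N (A : 'M[R]_N) : h_offdiag A = A - diag_mx (h_diag_of A).
Proof. by rewrite {2}[A]offdiag_decomp /h_Jk addrK. Qed.

Lemma energy_offdiag N M (A : 'M[R]_N) (s : 'M[R]_(N, M)) : h_configuration s ->
  h_energy (h_offdiag A) s = \tr (A *m h_gram s) - \sum_i A i i.
Proof.
move=> cs; rewrite /h_energy offdiag_eq mulmxBl mxtraceD raddfN /=.
rewrite tr_unit_diag; last by move=> i; exact: gram_diag.
by congr (_ - _); apply: eq_bigr => i _; rewrite mxE.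
Qed.

Lemma part1 N (J : 'M[R]_N) M (s : 'M[R]_(N, M)) (k : 'rV[R]_N) :
  h_lagrange J k s -> h_Jk J k *m h_gram s = 0.
Proof. by rewrite /h_lagrange /h_gram mulmxA => ->; rewrite mul0mx. Qed.

Lemma kill_sub N M (A S : 'M[R]_N) (s : 'M[R]_(N, M)) :
  (A <= kermx S^T)%MS -> (h_gram s <= S)%MS -> A *m s = 0.
Proof.
move=> /sub_kermxP AS /submxP [D eD].
have e1 : A *m (s *m s^T) = 0.
  have -> : s *m s^T = (s *m s^T)^T by rewrite trmx_mul trmxK.
  by rewrite -/(h_gram s) eD trmx_mul mulmxA AS mul0mx.
apply: gram_eq0; rewrite trmx_mul mulmxA -(mulmxA A) e1 mul0mx //.
Qed.

Lemma part2 N (S A : 'M[R]_N) : h_psd A -> (A :=: h_orthC S)%MS ->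
       A = h_Jk (h_offdiag A) (h_diag_of A) /\
       forall (M : nat) (s : 'M[R]_(N, M)),
         h_configuration s -> h_FS S (h_gram s) ->
         h_ground_state (h_offdiag A) s /\ h_lagrange (h_offdiag A) (h_diag_of A) s.
Proof.
move=> psdA eA; split; first exact: offdiag_decomp.
move=> M s cs [_ sS].
have As : A *m s = 0.
  by apply: (kill_sub (S := S)) => //; rewrite eA submx_refl.
split; last by rewrite /h_lagrange -offdiag_decomp.
split=> // M' s' cs'.
rewrite !energy_offdiag // /h_gram mulmxA As mul0mx mxtrace0.
apply: lerB => //; exact: tr_psd_ge0.
Qed.
End Parts12.
Section Faces.
Variable R : realType.

Lemma form_lin n (x y : 'M[R]_n) (a b : R) (v : 'rV[R]_n) :
  (v *m (a *: x + b *: y) *m v^T) 0 0 = a * (v *m x *m v^T) 0 0 + b * (v *m y *m v^T) 0 0.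
Proof.
rewrite mulmxDr mulmxDl -!scalemxAr -!scalemxAl.
move: (v *m x *m v^T) (v *m y *m v^T) => X Y; by rewrite !mxE.
Qed.

Lemma sym_lin n (x y : 'M[R]_n) (a b : R) :
  h_symmetric_mx x -> h_symmetric_mx y -> h_symmetric_mx (a *: x + b *: y).
Proof. by rewrite /h_symmetric_mx => sx sy; rewrite linearD /= !linearZ /= sx sy. Qed.

Lemma psd_comb n (x y : 'M[R]_n) (a b : R) : 0 <= a -> 0 <= b ->
  h_psd x -> h_psd y -> h_psd (a *: x + b *: y).
Proof.
move=> a0 b0 [sx px] [sy py]; split; first exact: sym_lin.
move=> v; rewrite form_lin; apply: addr_ge0; apply: mulr_ge0 => //.
Qed.

Lemma GN_comb n (x y : 'M[R]_n) (a : R) : 0 <= a <= 1 ->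
  h_GN x -> h_GN y -> h_GN (a *: x + (1 - a) *: y).
Proof.
move=> /andP [a0 a1] [px dx] [py dy]; split.
  by apply: psd_comb => //; rewrite subr_ge0.
by move=> i; rewrite !mxE dx dy !mulr1 addrC subrK.
Qed.

Lemma sym_ker n (x : 'M[R]_n) (v : 'rV[R]_n) : h_symmetric_mx x -> v *m x = 0 -> v *m x^T = 0.
Proof. by move=> ->. Qed.

Lemma comb_sub n (S x y z : 'M[R]_n) (a : R) : 0 < a < 1 ->
  h_psd y -> h_psd z -> h_symmetric_mx x -> x = a *: y + (1 - a) *: z -> (x <= S)%MS -> (y <= S)%MS.
Proof.
move=> /andP [a0 a1] psdy [sz pz] sx ex /submxP [D eD].
apply: ker_sub => v vS.
have vx : v *m x = 0 by rewrite -sx eD trmx_mul mulmxA vS mul0mx.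
have f0 : (v *m x *m v^T) 0 0 = 0 by rewrite vx mul0mx mxE.
rewrite ex form_lin in f0.
have hy := psdy.2 v; have hz := pz v.
have fy : (v *m y *m v^T) 0 0 = 0 by nra.
apply: sym_ker; first exact: psdy.1.
exact: psd_ker.
Qed.

Lemma FS_face n (S : 'M[R]_n) : h_is_face (@h_GN R n) (h_FS S).
Proof.
split; first by move=> x [].
split.
  move=> x y a [gx sx] [gy sy] a01; split; first exact: GN_comb.
  by rewrite addmx_sub // scalemx_sub.
move=> x y z a [gx sx] gy gz a01 ex; split; split => //.
  exact: (comb_sub a01 gy.1 gz.1 gx.1.1 ex).
have a01' : 0 < 1 - a < 1 by case/andP: a01 => a0 a1; apply/andP; split; lra.
apply: (comb_sub a01' gz.1 gy.1 gx.1.1) sx.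
have -> : 1 - (1 - a) = a by ring.
by rewrite ex addrC.
Qed.

End Faces.
Section Dom.
Variable R : realType.

Lemma sq_le_sum r (u : 'rV[R]_r) i : u 0 i ^+ 2 <= (u *m u^T) 0 0.
Proof.
rewrite mxE (bigD1 i) //= mxE -expr2 lerDl.
by apply: sumr_ge0 => k _; rewrite mxE -expr2 sqr_ge0.
Qed.

Lemma cs_bound r (u : 'rV[R]_r) (M : 'M[R]_r) :
  (u *m M *m u^T) 0 0 <= (\sum_i \sum_j `|M i j|) * (u *m u^T) 0 0.
Proof.
set S := (u *m u^T) 0 0.
have hij : forall i j, u 0 i * M i j * u 0 j <= `|M i j| * S.
  move=> i j.
  have hi := sq_le_sum u i; have hj := sq_le_sum u j.
  have e : `|u 0 i * M i j * u 0 j| = `|M i j| * (`|u 0 i| * `|u 0 j|).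
    by rewrite !normrM; ring.
  apply: le_trans (ler_norm _) _; rewrite e; apply: ler_wpM2l => //.
  rewrite -(ger0_norm (sqr_ge0 (u 0 i))) -(ger0_norm (sqr_ge0 (u 0 j))) !normrX in hi hj.
  have := normr_ge0 (u 0 i); have := normr_ge0 (u 0 j).
  move: (`|u 0 i|) (`|u 0 j|) hi hj => a b hi hj hb ha.
  have h := sqr_ge0 (a - b).
  have e2 : (a - b) ^+ 2 = a ^+ 2 + b ^+ 2 - 2 * (a * b) by ring.
  rewrite e2 in h; rewrite /S; lra.
have eL : (u *m M *m u^T) 0 0 = \sum_i \sum_j u 0 i * M i j * u 0 j.
  rewrite mxE; under eq_bigr do rewrite mxE mulr_suml.
  rewrite exchange_big /=; apply: eq_bigr => i _; apply: eq_bigr => j _; by rewrite !mxE.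
rewrite eL mulr_suml; apply: ler_sum => i _; rewrite mulr_suml.
by apply: ler_sum => j _; exact: hij.
Qed.
End Dom.
Section Dom2.
Variable R : realType.

Lemma dom_bound n (G0 G : 'M[R]_n) : h_psd G0 -> h_psd G -> (G <= G0)%MS ->
  exists2 lam : R, 0 <= lam & forall v : 'rV_n, (v *m G *m v^T) 0 0 <= lam * (v *m G0 *m v^T) 0 0.
Proof.
move=> psd0 [sG pG] sub.
have [r [X [e0 fX]]] := psd_factor psd0.
have [B XB] := row_freeP fX.
pose L := B^T.
have LX : L *m X = 1%:M by rewrite /L -trmx1 -XB trmx_mul trmxK.
have sX : (G <= X^T)%MS by apply: submx_trans sub _; rewrite e0 submxMl.
case/submxP: sX => E eE.
have eG : G = X *m E^T by rewrite -sG eE trmx_mul trmxK.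
have eM : G = X *m (L *m E) *m X^T.
  have eET : E^T = L *m G by rewrite eG mulmxA LX mul1mx.
  by rewrite {1}eG eET {1}eE !mulmxA.
exists (\sum_i \sum_j `|(L *m E) i j|).
  by apply: sumr_ge0 => i _; apply: sumr_ge0 => j _.
move=> v.
have -> : v *m G *m v^T = (v *m X) *m (L *m E) *m (v *m X)^T by rewrite {1}eM trmx_mul !mulmxA.
have -> : v *m G0 *m v^T = (v *m X) *m (v *m X)^T by rewrite e0 trmx_mul !mulmxA.
exact: cs_bound.
Qed.

Lemma GN_in_face n (G0 G : 'M[R]_n) : h_GN G0 -> h_GN G -> (G <= G0)%MS ->
  exists a : R, exists Z, 0 < a < 1 /\ h_GN Z /\ G0 = a *: G + (1 - a) *: Z.
Proof.
move=> [psd0 d0] [psdG dG] sub.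
have [lam lam0 hl] := dom_bound psd0 psdG sub.
pose a := (lam + 2)^-1.
have l2 : 0 < lam + 2 by lra.
have a0 : 0 < a by rewrite invr_gt0.
have a1 : a < 1 by rewrite invf_lt1 //; lra.
have al : a * lam <= 1.
  by rewrite /a mulrC ler_pdivrMr //; lra.
have a10 : 1 - a != 0 by rewrite subr_eq0 gt_eqF.
pose Z := (1 - a)^-1 *: (G0 - a *: G).
exists a, Z; split; first by rewrite a0 a1.
split; last by rewrite /Z scalerA mulfV // scale1r addrC subrK.
split.
  split.
    by rewrite /Z /h_symmetric_mx linearZ /= linearB /= linearZ /= psd0.1 psdG.1.
  move=> v; rewrite /Z -scalemxAr -scalemxAl mxE.
  apply: mulr_ge0; first by rewrite invr_ge0; lra.
  rewrite mulmxBr mulmxBl -scalemxAr -scalemxAl.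
  have := hl v; have := psd0.2 v; have := psdG.2 v.
  move: (v *m G *m v^T) (v *m G0 *m v^T) => MG MG0; rewrite !mxE.
  move: (MG 0 0) (MG0 0 0) => g g0 hg hg0 hb.
  have : a * g <= a * (lam * g0) by rewrite ler_wpM2l // ltW.
  nra.
by move=> i; rewrite /Z !mxE d0 dG mulr1 mulVf.
Qed.
End Dom2.
Section Repr.
Variable R : realType.
Variable n : nat.
Implicit Types (X Y : 'M[R]_n) (l : 'M[R]_n -> R).

Definition Bm l : 'M[R]_n :=
  \matrix_(i, j) (if i == j then 0 else l (delta_mx i j + delta_mx j i) / 2).

Lemma zds0 : h_zero_diag_sym (0 : 'M[R]_n).
Proof. by split; [rewrite /h_symmetric_mx trmx0 | move=> i; rewrite mxE]. Qed.

Lemma zdsD X Y : h_zero_diag_sym X -> h_zero_diag_sym Y -> h_zero_diag_sym (X + Y).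
Proof.
move=> [sX dX] [sY dY]; split; first by rewrite /h_symmetric_mx linearD /= sX sY.
by move=> i; rewrite mxE dX dY addr0.
Qed.

Lemma zdsZ a X : h_zero_diag_sym X -> h_zero_diag_sym (a *: X).
Proof.
move=> [sX dX]; split; first by rewrite /h_symmetric_mx linearZ /= sX.
by move=> i; rewrite mxE dX mulr0.
Qed.

Lemma zds_delta (i j : 'I_n) : i != j -> h_zero_diag_sym (delta_mx i j + delta_mx j i : 'M[R]_n).
Proof.
move=> ne; split; first by rewrite /h_symmetric_mx linearD /= !trmx_delta addrC.
move=> k; rewrite !mxE.
have h : ((k == i) && (k == j)) = false.
  by apply/negbTE; apply/andP => -[/eqP ki /eqP kj]; move: ne; rewrite -ki -kj eqxx.
by rewrite h andbC h addr0.
Qed.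

Lemma lin0 l : h_linear_on_LN l -> l 0 = 0.
Proof.
move=> hl; have := hl 1 0 0 zds0 zds0; rewrite scaler0 addr0 mul1r => e; lra.
Qed.

Lemma linD l X Y : h_linear_on_LN l -> h_zero_diag_sym X -> h_zero_diag_sym Y -> l (X + Y) = l X + l Y.
Proof. by move=> hl hX hY; have := hl 1 X Y hX hY; rewrite scale1r mul1r. Qed.

Lemma linZ l a X : h_linear_on_LN l -> h_zero_diag_sym X -> l (a *: X) = a * l X.
Proof. by move=> hl hX; have := hl a X 0 hX zds0; rewrite !addr0 lin0 // addr0. Qed.

Lemma lsum l (I : finType) (F : I -> 'M[R]_n) : h_linear_on_LN l ->
  (forall i, h_zero_diag_sym (F i)) ->
  h_zero_diag_sym (\sum_i F i) /\ l (\sum_i F i) = \sum_i l (F i).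
Proof.
move=> hl hF.
apply: (big_rec2 (fun Y y => h_zero_diag_sym Y /\ l Y = y)).
  by split; [exact: zds0 | exact: lin0].
move=> i Y y _ [hY eY]; split; first exact: zdsD.
by rewrite linD // eY.
Qed.

Lemma half_sum Y : \sum_i \sum_j (Y i j / 2) *: (delta_mx i j : 'M[R]_n) = 2^-1 *: Y.
Proof.
rewrite [in RHS](matrix_sum_delta Y) scaler_sumr; apply: eq_bigr => i _.
by rewrite scaler_sumr; apply: eq_bigr => j _; rewrite scalerA mulrC.
Qed.

Lemma sym_decomp X : h_symmetric_mx X ->
  X = \sum_i \sum_j (X i j / 2) *: (delta_mx i j + delta_mx j i).
Proof.
move=> sX.
have e2 : \sum_i \sum_j (X i j / 2) *: (delta_mx j i : 'M[R]_n) = 2^-1 *: X.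
  rewrite exchange_big /= -{2}sX -half_sum; apply: eq_bigr => i _; apply: eq_bigr => j _.
  by rewrite mxE.
have e : \sum_i \sum_j (X i j / 2) *: (delta_mx i j + delta_mx j i) =
   \sum_i \sum_j (X i j / 2) *: (delta_mx i j : 'M[R]_n) + \sum_i \sum_j (X i j / 2) *: (delta_mx j i : 'M[R]_n).
  rewrite -big_split /=; apply: eq_bigr => i _; rewrite -big_split /=.
  by apply: eq_bigr => j _; rewrite scalerDr.
rewrite e e2 half_sum -scalerDl.
have -> : (2^-1 + 2^-1 : R) = 1 by field.
by rewrite scale1r.
Qed.

Lemma l_repr l X : h_linear_on_LN l -> h_zero_diag_sym X -> l X = \tr (Bm l *m X).
Proof.
move=> hl [sX dX].
pose T i j := (X i j / 2) *: (delta_mx i j + delta_mx j i : 'M[R]_n).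
have hT : forall i j, h_zero_diag_sym (T i j).
  move=> i j; rewrite /T; case: (eqVneq i j) => [<-|ne].
    by rewrite dX mul0r scale0r; exact: zds0.
  by apply: zdsZ; exact: zds_delta.
have hTi : forall i, h_zero_diag_sym (\sum_j T i j) /\ l (\sum_j T i j) = \sum_j l (T i j).
  by move=> i; apply: lsum.
rewrite {1}(sym_decomp sX) -/T.
have [_ ->] := lsum hl (fun i => (hTi i).1).
rewrite /mxtrace; apply: eq_bigr => i _; rewrite (hTi i).2 mxE.
apply: eq_bigr => j _; rewrite /T !mxE.
case: (eqVneq i j) => [<-|ne].
  by rewrite dX mul0r scale0r lin0 // mul0r.
rewrite linZ //; last exact: zds_delta.
have -> : X j i = X i j by rewrite -{1}sX mxE.
by rewrite mulrC mulrA mulrAC.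
Qed.
End Repr.
Section Lim.
Variable R : realType.

Lemma gram_ge0 m k (M : 'M[R]_(m, k)) i : 0 <= (M *m M^T) i i.
Proof. by rewrite mxE; apply: sumr_ge0 => j _; rewrite mxE -expr2 sqr_ge0. Qed.

Lemma sqrt_bound (u : R) : 0 <= u <= 1 -> `|Num.sqrt (1 - u) - 1| <= u.
Proof.
move=> /andP [u0 u1].
have x0 : 0 <= 1 - u by lra.
have s0 := sqrtr_ge0 (1 - u).
have ss : Num.sqrt (1 - u) ^+ 2 = 1 - u by rewrite sqr_sqrtr.
move: (Num.sqrt (1 - u)) s0 ss => s s0 ss.
have s1 : s <= 1 by nra.
have sx : 1 - u <= s by nra.
rewrite ler0_norm; lra.
Qed.

Lemma limit_aux (q c e : R) : 0 <= c -> 0 < e ->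
  (forall t, 0 < t -> t <= e -> 0 <= t * q + c * t ^+ 2) -> 0 <= q.
Proof.
move=> c0 e0 H; rewrite leNgt; apply/negP => q0.
pose t := Num.min e (- q / (c + 1)).
have c1 : 0 < c + 1 by lra.
have t0 : 0 < t by rewrite lt_min e0 divr_gt0 //; lra.
have te : t <= e by rewrite ge_min lexx.
have tq : t * (c + 1) <= - q by rewrite -ler_pdivlMr // ge_min lexx orbT.
have := H t t0 te.
nra.
Qed.
End Lim.
Section PsdCone.
Variable R : realType.

Lemma psd_from_cone n (A G0 : 'M[R]_n) : A^T = A -> h_GN G0 ->
  (forall i, (A *m G0) i i = 0) ->
  (forall G, h_GN G -> 0 <= \tr (A *m G)) -> forall w : 'rV_n, 0 <= (w *m A *m w^T) 0 0.
Proof.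
move=> sA [[sG0 pG0] dG0] AG0 Apos w.
set M2 := (w *m w^T) 0 0.
have M20 : 0 <= M2 by exact: gram_ge0.
pose K := \sum_i \sum_j `|A i j * G0 j i|.
have K0 : 0 <= K by apply: sumr_ge0 => i _; apply: sumr_ge0 => j _.
apply: (@limit_aux _ _ (K * M2 ^+ 2) (M2 + 1)^-1).
- by apply: mulr_ge0 => //; rewrite exprn_ge0.
- by rewrite invr_gt0; lra.
move=> t t0 te.
have tM : t * M2 <= 1.
  rewrite -[(M2 + 1)^-1]div1r ler_pdivlMr in te; last lra.
  nra.
have wi : forall i, 0 <= t * w 0 i ^+ 2 <= 1.
  move=> i; apply/andP; split; first by apply: mulr_ge0; [exact: ltW | exact: sqr_ge0].
  apply: le_trans tM; apply: ler_wpM2l; [exact: ltW | exact: sq_le_sum].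
pose c := \row_i Num.sqrt (1 - t * w 0 i ^+ 2).
pose d := \row_i (c 0 i - 1).
pose D := diag_mx c. pose E := diag_mx d.
have DE : D = 1%:M + E.
  apply/matrixP => i j; rewrite !mxE; case: (eqVneq i j) => [->|ne].
    by rewrite !mulr1n addrC subrK.
  by rewrite ?(negbTE ne) !mulr0n addr0.
pose G' := D *m G0 *m D + t *: (w^T *m w).
have GN' : h_GN G'.
  split; first split.
  - rewrite /h_symmetric_mx /G' linearD /= linearZ /= !trmx_mul trmxK /D tr_diag_mx.
    by rewrite sG0 !mulmxA.
  - move=> v; rewrite /G' mulmxDr mulmxDl -scalemxAr -scalemxAl.
    have e1 : v *m (D *m G0 *m D) *m v^T = (v *m D) *m G0 *m (v *m D)^T.
      by rewrite trmx_mul /D tr_diag_mx !mulmxA.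
    have e2 : v *m (w^T *m w) *m v^T = (v *m w^T) *m (v *m w^T)^T.
      by rewrite trmx_mul trmxK !mulmxA.
    rewrite e1 e2.
    have h1 := pG0 (v *m D); have h2 := gram_ge0 (v *m w^T) 0.
    move: ((v *m D) *m G0 *m (v *m D)^T) ((v *m w^T) *m (v *m w^T)^T) h1 h2 => P Q h1 h2.
    rewrite !mxE; apply: addr_ge0 => //; apply: mulr_ge0 => //; exact: ltW.
  - move=> i; rewrite /G' /D mul_mx_diag mul_diag_mx !mxE big_ord1 !mxE dG0 mulr1.
    have := wi i => /andP [h1 h2].
    rewrite -expr2 sqr_sqrtr; last lra.
    ring.
have tr' := Apos G' GN'.
have t1 : \tr (A *m G0) = 0 by rewrite /mxtrace big1.
have t2 : \tr (A *m (G0 *m E)) = 0.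
  by rewrite mulmxA tr_mul_diag big1 // => i _; rewrite AG0 mul0r.
have t3 : \tr (A *m (E *m G0)) = 0.
  rewrite mulmxA mxtrace_mulC mulmxA tr_mul_diag big1 // => i _.
  have -> : G0 *m A = (A *m G0)^T by rewrite trmx_mul sA sG0.
  by rewrite mxE AG0 mul0r.
have etr : \tr (A *m G') = \tr (A *m E *m G0 *m E) + t * (w *m A *m w^T) 0 0.
  rewrite /G' mulmxDr mxtraceD -scalemxAr mxtraceZ.
  have -> : \tr (A *m (w^T *m w)) = (w *m A *m w^T) 0 0.
    by rewrite mulmxA mxtrace_mulC mulmxA /mxtrace big_ord1.
  congr (_ + _).
  rewrite DE !mulmxDl !mulmxDr !mul1mx !mulmx1 !mxtraceD t1 t2 t3 !add0r.
  by rewrite !mulmxA.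
have dB : forall k, `|d 0 k| <= t * M2.
  move=> k; rewrite mxE mxE; apply: le_trans (sqrt_bound (wi k)) _.
  apply: ler_wpM2l; [exact: ltW | exact: sq_le_sum].
have bound : \tr (A *m E *m G0 *m E) <= K * (t * M2) ^+ 2.
  rewrite /mxtrace /K mulr_suml; apply: ler_sum => i _.
  rewrite /E mul_mx_diag mxE mxE !mulr_suml; apply: ler_sum => j _.
  rewrite mul_mx_diag mxE.
  apply: le_trans (ler_norm _) _.
  rewrite !normrM.
  have hi := dB i; have hj := dB j.
  have := normr_ge0 (d 0 i); have := normr_ge0 (d 0 j).
  have := normr_ge0 (A i j); have := normr_ge0 (G0 j i).
  move: `|A i j| `|G0 j i| `|d 0 i| `|d 0 j| hi hj => a g x y hi hj g0 a0 y0 x0.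
  have xy : x * y <= (t * M2) ^+ 2.
    rewrite expr2; apply: ler_pM => //.
  have ag0 : 0 <= a * g by apply: mulr_ge0.
  have : a * g * (x * y) <= a * g * (t * M2) ^+ 2 by apply: ler_wpM2l.
  move=> h; apply: le_trans h; rewrite le_eqVlt; apply/orP; left; apply/eqP; ring.
rewrite etr in tr'.
have e : K * (t * M2) ^+ 2 = K * M2 ^+ 2 * t ^+ 2 by ring.
rewrite e in bound; lra.
Qed.
End PsdCone.
Section Part3.
Variable R : realType.

Lemma tr_delta n (A : 'M[R]_n) (i j : 'I_n) : \tr (A *m delta_mx i j) = A j i.
Proof.
rewrite /mxtrace (bigD1 j) //= big1 ?addr0.
  rewrite mxE (bigD1 i) //= big1 ?addr0; first by rewrite mxE !eqxx mulr1.
  by move=> l ne; rewrite mxE (negbTE ne) mulr0.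
move=> k ne; rewrite mxE big1 // => l _; by rewrite mxE (negbTE ne) andbF mulr0.
Qed.

Lemma surj_core n (G0 : 'M[R]_n) l : h_GN G0 -> h_linear_on_LN l ->
  (forall G, h_GN G -> 0 <= l (G - G0)) ->
  exists A, [/\ h_psd A, A *m G0 = 0 & forall X, h_zero_diag_sym X -> \tr (A *m X) = l X].
Proof.
move=> gG0 hl hpos; have [[sG0 pG0] dG0] := gG0.
pose B := Bm l.
pose k := \row_i (- (B *m G0) i i).
pose A := B + diag_mx k.
have sB : B^T = B.
  apply/matrixP => i j; rewrite !mxE eq_sym; case: eqP => // _; by rewrite addrC.
have sA : A^T = A by rewrite /A linearD /= sB tr_diag_mx.
have AG0d : forall i, (A *m G0) i i = 0.
  move=> i; rewrite /A /k mulmxDl mul_diag_mx.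
  move: (B *m G0) => P; rewrite !mxE.
  have -> : G0 i i = 1 := dG0 i.
  by rewrite mulr1 addrN.
have trA : forall X, h_zero_diag_sym X -> \tr (A *m X) = l X.
  move=> X hX; rewrite /A mulmxDl mxtraceD tr_diag_mul big1 ?addr0.
    by rewrite (l_repr hl hX).
  by move=> i _; rewrite hX.2 mulr0.
have Apos : forall G, h_GN G -> 0 <= \tr (A *m G).
  move=> G gG.
  have zd : h_zero_diag_sym (G - G0).
    split; first by rewrite /h_symmetric_mx linearB /= gG.1.1 sG0.
    by move=> i; rewrite !mxE gG.2 dG0 subrr.
  have -> : \tr (A *m G) = \tr (A *m (G - G0)) + \tr (A *m G0) by rewrite -mxtraceD -mulmxDr subrK.
  have -> : \tr (A *m G0) = 0 by rewrite /mxtrace big1.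
  by rewrite addr0 trA //; exact: hpos.
have psdA : h_psd A by split => //; exact: (psd_from_cone sA gG0 AG0d Apos).
have AG0 : A *m G0 = 0.
  have [r [X [eX _]]] := psd_factor gG0.1.
  have AX : A *m X = 0 by apply: tr_psd_eq0 psdA _; rewrite -eX /mxtrace big1.
  by rewrite eX mulmxA AX mul0mx.
by exists A.
Qed.

Lemma part3 N : forall (G0 : 'M[R]_N) (F0 : set 'M[R]_N),
     @h_GN R N G0 -> (\rank G0 < N)%N ->
     h_face_generated (@h_GN R N) G0 F0 -> closed F0 ->
     exists S : 'M[R]_N,
       h_completely_elliptic S /\ F0 = h_FS S /\
       (forall A, h_psd A -> (A <= h_orthC S)%MS -> h_coneC G0 (h_fA A)) /\
       (forall A B, h_psd A -> (A <= h_orthC S)%MS -> h_psd B -> (B <= h_orthC S)%MS ->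
          (forall X, h_zero_diag_sym X -> h_fA A X = h_fA B X) -> A = B) /\
       (forall l, h_coneC G0 l -> exists2 A, h_psd A /\ (A <= h_orthC S)%MS &
          forall X, h_zero_diag_sym X -> h_fA A X = l X).
Proof.
move=> G0 F0 gG0 rk [faceF0 [F0G0 minF0]] _.
have [[sG0 pG0] dG0] := gG0.
have kill : forall A : 'M[R]_N, (A <= h_orthC G0)%MS -> A *m G0 = 0.
  by move=> A; rewrite /h_orthC => /sub_kermxP; rewrite sG0.
exists G0; split.
  have [X [eX fX]] := psd_factor_rank gG0.1.
  exists X; split; last split.
  - have sub : (G0 <= X^T)%MS by apply/submxP; exists X.
    have e : \rank (X *m X^T) = \rank X := gram_rank X.
    rewrite -eX in e.
    have h := (mxrank_leqif_sup sub).2.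
    by rewrite -h; apply/eqP; rewrite mxrank_tr; exact: e.
  - move=> i; have eii : (X *m X^T) i i = 1 by rewrite -eX; exact: dG0 i.
    by rewrite -eii mxE; apply: eq_bigr => j _; rewrite mxE expr2.
  - have e : \rank (X *m X^T) = \rank X := gram_rank X.
    by rewrite -eX in e; exact: esym e.
split.
  apply/seteqP; split.
    apply: minF0; first exact: FS_face.
    by split => //; exact: submx_refl.
  move=> G [gG sG].
  have [a [Z [a01 [gZ eG0]]]] := GN_in_face gG0 gG sG.
  by have [] := faceF0.2.2 G0 G Z a F0G0 gG gZ a01 eG0.
split.
  move=> A psdA sA; have AG0 := kill A sA; split.
    by move=> a X Y _ _; rewrite /h_fA mulmxDr -scalemxAr mxtraceD mxtraceZ.
  move=> G gG; rewrite /h_fA mulmxBr AG0 subr0.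
  have [r [X [eX _]]] := psd_factor gG.1; rewrite eX; exact: tr_psd_ge0.
split.
  move=> A B psdA sA psdB sB H.
  have AG0 := kill A sA; have BG0 := kill B sB.
  have symA : forall i j, A j i = A i j by move=> i j; rewrite -{1}psdA.1 mxE.
  have symB : forall i j, B j i = B i j by move=> i j; rewrite -{1}psdB.1 mxE.
  have off : forall i j, i != j -> A i j = B i j.
    move=> i j ne; have := H _ (@zds_delta R N i j ne).
    rewrite /h_fA !mulmxDr !mxtraceD !tr_delta symA symB; lra.
  apply/matrixP => i j; case: (eqVneq i j) => [<-|ne]; last exact: off.
  have hA : (A *m G0) i i = 0 by rewrite AG0 mxE.
  have hB : (B *m G0) i i = 0 by rewrite BG0 mxE.
  rewrite mxE (bigD1 i) //= dG0 mulr1 in hA.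
  rewrite mxE (bigD1 i) //= dG0 mulr1 in hB.
  have e : \sum_(j | j != i) A i j * G0 j i = \sum_(j | j != i) B i j * G0 j i.
    by apply: eq_bigr => k ne; rewrite off // eq_sym.
  lra.
move=> l [hl hpos].
have [A [psdA AG0 trA]] := surj_core gG0 hl hpos.
exists A => //; split => //.
by rewrite /h_orthC; apply/sub_kermxP; rewrite sG0.
Qed.
End Part3.

Unset Implicit Arguments.
Set Strict Implicit.
Set Printing Implicit Defensive.

Theorem theorem3 (R : realType) (N : nat) (J : 'M[R]_N) :
  h_symmetric_mx J -> (forall i, J i i = 0) ->
  (* (i) *)
  (forall (M : nat) (s : 'M[R]_(N, M)) (k : 'rV[R]_N),
     h_ground_state J s -> h_lagrange J k s -> h_Jk J k *m h_gram s = 0)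
  /\
  (* (ii) *)
  (forall S : 'M[R]_N,
     h_completely_elliptic S -> h_nontrivial_face (@h_GN R N) (h_FS S) -> closed (h_FS S) ->
     forall A : 'M[R]_N, h_psd A -> (A :=: h_orthC S)%MS ->
       A = h_Jk (h_offdiag A) (h_diag_of A) /\
       forall (M : nat) (s : 'M[R]_(N, M)),
         h_configuration s -> h_FS S (h_gram s) ->
         h_ground_state (h_offdiag A) s /\ h_lagrange (h_offdiag A) (h_diag_of A) s)
  /\
  (* (iii) *)
  (forall (G0 : 'M[R]_N) (F0 : set 'M[R]_N),
     @h_GN R N G0 -> (\rank G0 < N)%N ->
     h_face_generated (@h_GN R N) G0 F0 -> closed F0 ->
     exists S : 'M[R]_N,
       h_completely_elliptic S /\ F0 = h_FS S /\
       (* f maps the cone into C(G0) *)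
       (forall A, h_psd A -> (A <= h_orthC S)%MS -> h_coneC G0 (h_fA A)) /\
       (* injective (functionals compared on L_N) *)
       (forall A B, h_psd A -> (A <= h_orthC S)%MS -> h_psd B -> (B <= h_orthC S)%MS ->
          (forall X, h_zero_diag_sym X -> h_fA A X = h_fA B X) -> A = B) /\
       (* surjective onto C(G0) *)
       (forall l, h_coneC G0 l -> exists2 A, h_psd A /\ (A <= h_orthC S)%MS &
          forall X, h_zero_diag_sym X -> h_fA A X = l X)).
Proof.
move=> _ _; split.
  by move=> M s k _; exact: part1.
split.
  by move=> S _ _ _ A psdA eA; exact: part2.
exact: part3.
Qed.
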